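(* Let $X$ be a separable metrizable space and $A\subsetneq X$ a proper subset. Then $\mathcal{M}(A)$ is of type $Z$ in $\mathcal{M}(X)$. More precisely, for $a\in X\setminus A$, the maps $\Phi_n\colon\mathcal{M}(X)\to\mathcal{M}(X)$, $\Phi_n(u)=a$ on $[0,1/n)$ and $\Phi_n(u)=u$ on $[1/n,1]$, have images disjoint from $\mathcal{M}(A)$ and converge to $\mathrm{id}_{\mathcal{M}(X)}$ uniformly on compact subsets of $\mathcal{M}(X)$. Moreover, $\overline{\mathcal{M}(A)}=\mathcal{M}(\overline{A})$.
   Context: For a separable metrizable space $X$, $\mathcal{M}(X)$ is the space of equivalence classes (modulo equality Lebesgue-a.e. on $[0,1]$) of Lebesgue measurable functions $u\colon[0,1]\to X$, topologized by the metric $(u,w)\mapsto\int_0^1 d(u(t),w(t))\,dt$ for any compatible bounded metric $d$ on $X$. For $A\subset X$, $\mathcal{M}(A)$ is the subset of $\mathcal{M}(X)$ of classes with a representative with values in $A$. A subset $B$ of a metric space $Z$ is of type $Z$ if the continuous maps from the Hilbert cube $Q$ into $Z\setminus B$ are dense in $\mathcal{C}(Q,Z)$ in the topology of uniform convergence. *)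

(* Defs.v *)
From mathcomp Require Import all_boot all_order all_algebra.
From mathcomp Require Import all_classical all_reals all_analysis.
Import Order.TTheory GRing.Theory Num.Theory.
Local Open Scope classical_set_scope.
Local Open Scope ring_scope.

Set Implicit Arguments.
Unset Strict Implicit.
Unset Printing Implicit Defensive.

(* The domain type of the completed Lebesgue measure (its carrier is R). *)
Definition LebT (R : realType) :=
  caratheodory_type (R:=R)
    (T:=lebesgue_stieltjes_measure_ocitv_type__canonical__measurable_structure_SemiRingOfSets R)
    (wlength idfun)^*%mu.

Definition I01 (R : realType) : set R := `[(0:R), 1]%classic.

Definition is_metric (R : realType) (X : Type) (d : X -> X -> R) : Prop :=
  (forall x y, 0 <= d x y) /\ (forall x y, d x y = 0 <-> x = y) /\
  (forall x y, d x y = d y x) /\ (forall x y z, d x z <= d x y + d y z).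

Definition bounded_metric (R : realType) (X : Type) (d : X -> X -> R) : Prop :=
  exists M : R, forall x y, d x y <= M.

Definition separable_metric (R : realType) (X : Type) (d : X -> X -> R) : Prop :=
  exists S : set X, countable S /\
    forall x (e : R), 0 < e -> exists y, S y /\ d x y < e.

Definition d_open (R : realType) (X : Type) (d : X -> X -> R) (U : set X) : Prop :=
  forall x, U x -> exists2 e : R, 0 < e & forall y, d x y < e -> U y.

Definition d_closure (R : realType) (X : Type) (d : X -> X -> R) (A : set X) : set X :=
  fun x => forall e : R, 0 < e -> exists y, A y /\ d x y < e.

(* u : [0,1] -> X is Lebesgue measurable (only the values on [0,1] matter):
   preimages of open (hence of Borel) sets are Lebesgue measurable. *)
Definition leb_measurable (R : realType) (X : Type) (d : X -> X -> R)
    (u : R -> X) : Prop :=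
  forall U : set X, d_open d U ->
    measurable ((@I01 R) `&` (u @^-1` U) : set (LebT R)).

Definition ae_eq01 (R : realType) (X : Type) (u w : R -> X) : Prop :=
  {ae (@completed_lebesgue_measure R), forall t : LebT R,
      @I01 R t -> u t = w t}.

(* Representatives of elements of M(X). *)
Definition MX (R : realType) (X : Type) (d : X -> X -> R) : set (R -> X) :=
  fun u => leb_measurable d u.

(* Representatives of elements of M(A): classes having a representative
   with values in A. *)
Definition MA (R : realType) (X : Type) (d : X -> X -> R) (A : set X)
    : set (R -> X) :=
  fun u => leb_measurable d u /\
    exists w : R -> X, leb_measurable d w /\
      (forall t : R, @I01 R t -> A (w t)) /\ ae_eq01 u w.

Definition Mdist (R : realType) (X : Type) (d : X -> X -> R) (u w : R -> X) : R :=
  fine (\int[@completed_lebesgue_measure R]_(t in (@I01 R : set (LebT R)))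
          (d (u t) (w t))%:E)%E.

Definition hcube (R : realType) : set (nat -> R) :=
  fun q => forall i, 0 <= q i <= 1.

(* continuity of f : Q -> M(X), Q with the product topology *)
Definition cont_Q (R : realType) (X : Type) (d : X -> X -> R)
    (f : (nat -> R) -> (R -> X)) : Prop :=
  forall q, hcube q -> forall e : R, 0 < e ->
    exists (N : nat) (delta : R), 0 < delta /\
      forall q', hcube q' -> (forall i, (i < N)%N -> `|q' i - q i| < delta) ->
        Mdist d (f q) (f q') < e.

(* B (a subset of M(X)) is of type Z in M(X): continuous maps Q -> M(X) \ B
   are dense in C(Q, M(X)) for the uniform topology. *)
Definition typeZ (R : realType) (X : Type) (d : X -> X -> R) (B : set (R -> X))
    : Prop :=
  forall f : (nat -> R) -> (R -> X),
    (forall q, hcube q -> MX d (f q)) -> cont_Q d f ->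
    forall e : R, 0 < e ->
      exists g : (nat -> R) -> (R -> X),
        (forall q, hcube q -> MX d (g q) /\ ~ B (g q)) /\ cont_Q d g /\
        (forall q, hcube q -> Mdist d (f q) (g q) < e).

Definition M_open (R : realType) (X : Type) (d : X -> X -> R) (U : set (R -> X))
    : Prop :=
  forall u, U u -> MX d u -> exists2 e : R, 0 < e &
    forall w, MX d w -> Mdist d u w < e -> U w.

Definition M_compact (R : realType) (X : Type) (d : X -> X -> R) (K : set (R -> X))
    : Prop :=
  K `<=` MX d /\
  forall (I : Type) (U : I -> set (R -> X)),
    (forall i, M_open d (U i)) -> K `<=` \bigcup_i U i ->
    exists F : set I, finite_set F /\ K `<=` \bigcup_(i in F) U i.

Definition M_closure (R : realType) (X : Type) (d : X -> X -> R) (B : set (R -> X))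
    : set (R -> X) :=
  fun u => MX d u /\ forall e : R, 0 < e -> exists w, B w /\ Mdist d u w < e.

(* Phi_n (n >= 1, written n.+1): a on [0, 1/n), u on [1/n, 1] *)
Definition Phi (R : realType) (X : Type) (n : nat) (a : X) (u : R -> X) : R -> X :=
  fun t => if t < (n.+1%:R)^-1 then a else u t.

(* Main.v *)
Require Import Defs.
From mathcomp Require Import all_boot all_order all_algebra.
From mathcomp Require Import all_classical all_reals all_analysis.
From mathcomp Require Import measurable_realfun.
From mathcomp Require Import lra.
Import Order.TTheory GRing.Theory Num.Theory.
Local Open Scope classical_set_scope.
Local Open Scope ring_scope.

Lemma int_mono d (T : measurableType d) (R : realType) (mu : {measure set T -> \bar R})
  (D : set T) (f g : T -> \bar R) :
  (forall x, D x -> (0 <= f x)%E) -> (forall x, D x -> (f x <= g x)%E) ->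
  (\int[mu]_(x in D) f x <= \int[mu]_(x in D) g x)%E.
Proof.
move=> f0 fg.
have g0 : forall x, D x -> (0 <= g x)%E by move=> x Dx; exact: le_trans (f0 _ Dx) (fg _ Dx).
rewrite (ge0_integralE _ f0) (ge0_integralE _ g0).
apply: le_ereal_sup => _ [h hf <-]; exists h => //= x.
apply: le_trans (hf x) _; rewrite /patch; case: ifP => // /[!inE] Dx; exact: fg.
Qed.

Section Basics.
Variable R : realType.
Notation mu := (@completed_lebesgue_measure R).
Notation LT := (LebT R).

Lemma mitv (i : interval R) : measurable ([set` i] : set LT).
Proof. apply: sub_caratheodory. exact: measurable_itv. Qed.

Lemma muitv (i : interval R) :
  mu ([set` i] : set LT) = lebesgue_measure ([set` i] : set R).
Proof. reflexivity. Qed.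

Lemma I01m : measurable (@I01 R : set LT).
Proof. exact: mitv. Qed.

Lemma muI01 : mu (@I01 R : set LT) = 1%:E.
Proof. rewrite /I01 muitv lebesgue_measure_itv /= lte_fin ltr01 oppr0 adde0 //. Qed.

Lemma int_eps_ind (eps c : R) (S : set LT) : measurable S -> 0 <= eps -> 0 <= c ->
  (\int[mu]_(t in (@I01 R : set LT)) ((eps + c * \1_S t)%:E)
   = eps%:E + c%:E * mu (S `&` (@I01 R : set LT)))%E.
Proof.
move=> mS e0 c0.
under eq_integral do rewrite EFinD.
have I1 : measurable (@I01 R : set LT) by exact: I01m.
rewrite ge0_integralD //; last 2 first.
- by move=> x _; rewrite lee_fin mulr_ge0.
- apply/measurable_EFinP; apply: measurable_funM => //; exact: measurable_indic.
have -> : (\int[mu]_(x in (@I01 R : set LT)) eps%:E = eps%:E)%E.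
  by rewrite (integral_cst _ I1) -[RHS]mule1; congr (_ * _)%E; exact: muI01.
rewrite (integralZl_indic _ (fun _ => S)) //.
rewrite integral_indic //. by move=> c0'; move: c0; rewrite leNgt c0'.
Qed.

End Basics.

Lemma int_cst01 (R : realType) (r : R) :
  (\int[@completed_lebesgue_measure R]_(x in (@I01 R : set (LebT R))) r%:E = r%:E)%E.
Proof.
by rewrite (integral_cst _ (I01m R)) -[RHS]mule1; congr (_ * _)%E; exact: muI01.
Qed.

Section Metric.
Variables (R : realType) (X : Type) (d : X -> X -> R).
Hypothesis hm : is_metric d.
Variable M : R.
Hypothesis hM : forall x y, d x y <= M.
Notation mu := (@completed_lebesgue_measure R).
Notation LT := (LebT R).
Notation I := (@I01 R : set LT).

Lemma d_ge0 x y : 0 <= d x y. Proof. by case: hm. Qed.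
Lemma d_xx x : d x x = 0. Proof. by case: hm => _ [h _]; apply/h. Qed.
Lemma d_sym x y : d x y = d y x. Proof. by case: hm => _ [_ []]. Qed.
Lemma d_tri x y z : d x z <= d x y + d y z. Proof. by case: hm => _ [_ [_]]. Qed.

Lemma intd_ge0 (u w : R -> X) :
  (0 <= \int[mu]_(t in I) (d (u t) (w t))%:E)%E.
Proof. by apply: integral_ge0 => t _; rewrite lee_fin d_ge0. Qed.

Lemma intd_leM (u w : R -> X) :
  (\int[mu]_(t in I) (d (u t) (w t))%:E <= M%:E)%E.
Proof.
rewrite -[X in (_ <= X)%E](@int_cst01 R M); apply: int_mono => t _.
  by rewrite lee_fin d_ge0.
by rewrite lee_fin.
Qed.

Lemma intdE (u w : R -> X) :
  (\int[mu]_(t in I) (d (u t) (w t))%:E)%E = (Mdist d u w)%:E.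
Proof.
rewrite /Mdist fineK // ge0_fin_numE ?intd_ge0 //.
exact: le_lt_trans (intd_leM u w) (ltry _).
Qed.

Lemma Mdist_ge0 u w : 0 <= Mdist d u w.
Proof. by rewrite -lee_fin -intdE intd_ge0. Qed.

Lemma Mdist_le (u w : R -> X) (G : LT -> \bar R) (c : R) :
  (forall t, I t -> ((d (u t) (w t))%:E <= G t)%E) ->
  (\int[mu]_(t in I) G t <= c%:E)%E -> Mdist d u w <= c.
Proof.
move=> hG hc; rewrite -lee_fin -intdE; apply: le_trans hc.
by apply: int_mono => // t _; rewrite lee_fin d_ge0.
Qed.

Lemma Mdist_mono (u w u' w' : R -> X) :
  (forall t, I t -> d (u t) (w t) <= d (u' t) (w' t)) ->
  Mdist d u w <= Mdist d u' w'.
Proof.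
move=> h; apply: (@Mdist_le u w (fun t => (d (u' t) (w' t))%:E)).
  by move=> t It; rewrite lee_fin h.
by rewrite intdE.
Qed.

Lemma Mdist_ge (u w : R -> X) (S : set LT) (c : R) :
  measurable S -> S `<=` I -> 0 <= c ->
  (forall t, S t -> c <= d (u t) (w t)) ->
  (c%:E * mu S <= (Mdist d u w)%:E)%E.
Proof.
move=> mS SI c0 h; rewrite -intdE.
have := @int_eps_ind R 0 c S mS (lexx 0) c0; rewrite add0e (setIidl SI) => <-.
apply: int_mono => t It; first by rewrite lee_fin add0r mulr_ge0.
rewrite lee_fin add0r /indic; case: (boolP (t \in S)) => [/set_mem St|_].
  by rewrite mulr1 h.
by rewrite mulr0 d_ge0.
Qed.


Lemma mu_co (x : R) : 0 <= x -> mu ([set` `[0, x[] : set LT) = x%:E.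
Proof.
move=> x0; rewrite muitv lebesgue_measure_itv /= lte_fin.
have [xp|] := ltP 0 x; first by rewrite oppr0 adde0.
by move=> x0'; have -> : x = 0 by apply/eqP; rewrite eq_le x0' x0.
Qed.

Lemma Phi_meas n a (u : R -> X) : MX d u -> MX d (Phi n a u).
Proof.
move=> mu0 U oU.
set r := (n.+1%:R)^-1 : R.
have mI : measurable (I `&` u @^-1` U) by exact: mu0.
have E1 : I `&` (Phi n a u) @^-1` U =
   (I `&` u @^-1` U `&` [set` `[r, +oo[]) `|`
   (if pselect (U a) then I `&` [set` `]-oo, r[] else set0).
  apply/seteqP; split => t /=.
    move=> [It]; rewrite /Phi -/r; case: ifP => tr HU.
      by right; case: pselect => // _; split => //=; rewrite in_itv /= tr.
    by left; split; [split|rewrite /= in_itv /= andbT leNgt tr].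
  case=> [[[It Hu]]|].
    by rewrite /= in_itv /= andbT leNgt /Phi -/r => /negbTE ->.
  case: pselect => // Ua [It]; rewrite /= in_itv /= /Phi -/r => ->; split => //.
rewrite E1; apply: measurableU; first by apply: measurableI => //; exact: mitv.
by case: (pselect (U a)) => ?; [apply: measurableI; [exact: I01m|exact: mitv]|exact: measurable0].
Qed.

Lemma Phi_notMA (A : set X) n a (u : R -> X) : ~ A a -> ~ MA d A (Phi n a u).
Proof.
move=> nAa [_ [w [mw [wA ae]]]].
set r := (n.+1%:R)^-1 : R.
have r0 : 0 < r by rewrite invr_gt0.
have r1 : r <= 1 by rewrite invf_le1 // ler1n.
case: ae => N [mN N0 sub].
have sub2 : ([set` `[0, r[] : set LT) `<=` N.
  move=> t /=; rewrite in_itv /= => /andP[t0 tr].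
  have It : I t by rewrite /I01 /= in_itv /= t0 (le_trans (ltW tr) r1).
  apply: sub => /= h; apply: nAa; have := wA t It; rewrite -(h It) /Phi -/r tr //.
pose S0 := ([set` `[0, r[] : set LT).
have h2 : (mu S0 <= mu N)%E :=
  le_measure mu (mem_set (@mitv R `[0, r[)) (mem_set mN) sub2.
move: h2; rewrite N0 mu_co ?lee_fin ?(ltW r0) // => /(lt_le_trans r0).
by rewrite ltxx.
Qed.

Lemma M_ge0 (x : X) : 0 <= M.
Proof. by rewrite (le_trans _ (hM x x)) // d_xx. Qed.

Lemma Phi_dist n a (u : R -> X) : Mdist d (Phi n a u) u <= M * (n.+1%:R)^-1.
Proof.
set r := (n.+1%:R)^-1 : R.
have r0 : 0 < r by rewrite invr_gt0.
have M0 := M_ge0 a.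
set S := ([set` `[0, r[] : set LT).
have r1 : r <= 1 by rewrite invf_le1 // ler1n.
have SI : S `<=` I.
  move=> t /=; rewrite /S /= !in_itv /= => /andP[t0 tr].
  by rewrite /I01 /= in_itv /= t0 (le_trans (ltW tr) r1).
apply: (@Mdist_le _ _ (fun t => (0 + M * \1_S t)%:E)).
  move=> t It; rewrite lee_fin add0r /Phi -/r; case: ifP => tr.
    have St : S t by rewrite /S /= in_itv /= tr andbT; move: It; rewrite /I01 /= in_itv /= => /andP[].
    by rewrite /indic (mem_set St) mulr1 hM.
  by rewrite d_xx mulr_ge0.
by rewrite int_eps_ind ?(setIidl SI) ?mu_co ?(ltW r0) // ?add0e -?EFinM //; exact: mitv.
Qed.

Lemma ball_open (y : X) (e : R) : d_open d [set x | d x y < e].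
Proof.
move=> x /= hx; exists (e - d x y); first by rewrite subr_gt0.
move=> z hz; apply: le_lt_trans (d_tri z x y) _; rewrite d_sym; lra.
Qed.

Lemma ballm (u : R -> X) (y : X) (e : R) : MX d u ->
  measurable (I `&` [set t | d (u t) y < e]).
Proof. by move=> mu0; exact: (mu0 _ (ball_open y e)). Qed.

Lemma enum_dense : separable_metric d -> X ->
  exists en : nat -> X, forall x (del : R), 0 < del -> exists i, d x (en i) < del.
Proof.
case=> S [cS dS] x0.
have [s0 [Ss0 _]] := dS x0 1 ltr01.
move/countable_injP: cS => [f finj].
pose en i := if pselect (exists s, S s /\ f s = i) is left h then projT1 (cid h) else s0.
exists en => x del del0; have [s [Ss hs]] := dS x del del0.
exists (f s); rewrite /en; case: pselect => [h|nh]; last by exfalso; apply: nh; exists s.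
case: cid => s' [Ss' fs'] /=.
by have -> : s' = s by apply: finj; rewrite ?inE.
Qed.

Lemma approx (A : set X) (a0 : X) (b : nat -> X) (e : R) (u : R -> X) :
  A a0 -> (forall i, A (b i)) -> MX d u ->
  exists v : R -> X, MX d v /\ (forall t, A (v t)) /\
    forall t, (exists i, d (u t) (b i) < e) -> d (u t) (v t) < e.
Proof.
move=> Aa0 bA mu0.
pose v t := if pselect (exists i, d (u t) (b i) < e) is left h then b (ex_minn h) else a0.
exists v; split; last split.
- move=> U oU.
  pose B j := I `&` [set t | d (u t) (b j) < e].
  have mB j : measurable (B j) by exact: ballm.
  pose G i := B i `&` \bigcap_j (if (j < i)%N then ~` B j else setT).
  have mG i : measurable (G i).
    apply: measurableI => //; apply: bigcapT_measurable => j.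
    by case: ifP => _; [exact: measurableC|exact: measurableT].
  have E1 : I `&` v @^-1` U =
     (\bigcup_i (if pselect (U (b i)) then G i else set0)) `|`
     (if pselect (U a0) then I `&` \bigcap_j (~` B j) else set0).
    apply/seteqP; split => t /=.
      move=> [It]; rewrite /v; case: pselect => [h|nh] HU.
        left; move: HU; case: (ex_minnP h) => m Pm minm HU.
        exists m => //; case: (pselect (U (b m))) => // ?; split; first by split.
        move=> j _; case: ifP => // jm [_ Pj].
        by have := minm j Pj; rewrite leqNgt jm.
      right; case: (pselect (U a0)) => // ?; split => // j _ [_ Pj].
      by apply: nh; exists j.
    case=> [[i _]|].
      case: pselect => // Ubi [[It Pi] Hj]; split => //.
      rewrite /v; case: pselect => [h|nh]; last by exfalso; apply: nh; exists i.
      case: (ex_minnP h) => m Pm minm.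
      have mi := minm i Pi.
      have [/eqP -> //|] := boolP (m == i).
      move=> mni; have lmi : (m < i)%N by rewrite ltn_neqAle mni mi.
      by exfalso; have := Hj m Logic.I; rewrite lmi => /(_ (conj It Pm)).
    case: pselect => // Ua0 [It Hj]; split => //.
    rewrite /v; case: pselect => // -[j Pj].
    by exfalso; apply: (Hj j Logic.I).
  rewrite E1; apply: measurableU.
    apply: bigcupT_measurable => i.
    by case: (pselect (U (b i))) => ?; [exact: mG|exact: measurable0].
  case: (pselect (U a0)) => ?; last exact: measurable0.
  apply: measurableI; first exact: I01m.
  by apply: bigcapT_measurable => j; exact: measurableC.
- by move=> t; rewrite /v; case: pselect.
- move=> t hex; rewrite /v; case: pselect => // h.
  by case: (ex_minnP h).
Qed.

Lemma eqle_ (a b : \bar R) : a = b -> (a <= b)%E.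
Proof. by move=> ->. Qed.

Lemma addb0le (a b : \bar R) : b = 0%E -> (a + b <= a)%E.
Proof. by move=> ->; rewrite adde0. Qed.

Lemma small_inv (e : R) : 0 < e -> exists k : nat, (k.+1%:R)^-1 < e.
Proof.
move=> e0; exists (Num.truncn e^-1); have h := truncnS_gt e^-1.
by rewrite -[X in _ < X](invrK e) ltf_pV2 ?posrE ?invr_gt0.
Qed.

Lemma closure_open (A : set X) : d_open d (~` d_closure d A).
Proof.
move=> x /= nC.
have [e [e0 he]] : exists e, 0 < e /\ forall y, A y -> e <= d x y.
  apply: contrapT => H; apply: nC => e e0; apply: contrapT => H2; apply: H.
  exists e; split => // y Ay; rewrite leNgt; apply/negP => lt; apply: H2; by exists y.
exists (e / 2); first by rewrite divr_gt0.
move=> z hz Cz; have [y [Ay dy]] := Cz (e / 2) (divr_gt0 e0 (ltr0Sn _ 1)).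
have := he y Ay; have := d_tri x z y; lra.
Qed.

Lemma closure_fwd (A : set X) (u : R -> X) :
  M_closure d (MA d A) u -> MA d (d_closure d A) u.
Proof.
move=> [mu0 hcl].
have I0 : I 0 by rewrite /I01 /= in_itv /= lexx ler01.
have [a0 Aa0] : exists a0, A a0.
  have [w [[_ [w' [_ [w'A _]]]] _]] := hcl 1 ltr01.
  by exists (w' 0); exact: w'A.
set C := d_closure d A.
have Ca0 : C a0 by move=> e e0; exists a0; rewrite d_xx.
set Q := I `&` u @^-1` (~` C).
have mQ : measurable Q := mu0 _ (closure_open A).
have Qneg : mu.-negligible Q.
  pose V k := [set x | exists r, (k.+1%:R)^-1 < r /\ forall y, A y -> r <= d x y].
  have oV k : d_open d (V k).
    move=> x [r [kr hr]]; exists (r - (k.+1%:R)^-1); first by rewrite subr_gt0.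
    move=> z hz; exists (r - d x z); split; first by set c := (k.+1%:R)^-1 in hz kr *; lra.
    move=> y Ay; have := hr y Ay; have := d_tri x z y; lra.
  pose Qk k := I `&` u @^-1` (V k).
  have QQ : Q `<=` \bigcup_k Qk k.
    move=> t [It nC].
    have [e [e0 he]] : exists e, 0 < e /\ forall y, A y -> e <= d (u t) y.
      apply: contrapT => H; apply: nC => e e0; apply: contrapT => H2; apply: H.
      exists e; split => // y Ay; rewrite leNgt; apply/negP => lt; apply: H2; by exists y.
    have [k hk] := small_inv _ e0.
    by exists k => //; split => //; exists e.
  apply: (negligibleS QQ); apply: negligible_bigcup => k.
  have mQk : measurable (Qk k) := mu0 _ (oV k).
  apply/negligibleP => //.
  set c := (k.+1%:R)^-1 : R.
  have c0 : 0 < c by rewrite invr_gt0.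
  have key : forall e, 0 < e -> (c%:E * mu (Qk k) < e%:E)%E.
    move=> e e0.
    have [w [[_ [w' [mw' [w'A [N' [mN' N'0 sub]]]]]] dw]] := hcl e e0.
    set S := Qk k `\` N'.
    have mS : measurable S by exact: measurableD.
    have SI : S `<=` I by move=> t [[]].
    have hS : forall t, S t -> c <= d (u t) (w t).
      move=> t [[It [r [cr hr]]] nN].
      have ww : w t = w' t.
        case: (pselect (w t = w' t)) => // h; exfalso; apply: nN; apply: sub => /= H.
        exact: h (H It).
      by rewrite ww; apply: le_trans (ltW cr) (hr _ (w'A t It)).
    have h1 := @Mdist_ge u w S c mS SI (ltW c0) hS.
    have h2 : (mu (Qk k) <= mu S)%E.
      have sU : Qk k `<=` S `|` N'.
        move=> t Qt; case: (pselect (N' t)) => h; [by right|by left].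
      have := le_measure mu (mem_set mQk) (mem_set (measurableU _ _ mS mN')) sU.
      move=> /le_trans; apply.
      apply: le_trans (measureU2 mu mS mN') _; apply: addb0le; exact: N'0.
    have h3 : (c%:E * mu (Qk k) <= c%:E * mu S)%E.
      by apply: lee_wpmul2l => //; rewrite lee_fin ltW.
    apply: le_lt_trans h3 _; apply: le_lt_trans h1 _; by rewrite lte_fin.
  have m0 : (0 <= mu (Qk k))%E := measure_ge0 _ _.
  have m1 : (mu (Qk k) <= 1%E)%E.
    have := le_measure mu (mem_set mQk) (mem_set (I01m R)) (fun t (h : Qk k t) => h.1).
    move=> /le_trans; apply; apply: eqle_; exact: muI01.
  have mfin : mu (Qk k) = (fine (mu (Qk k)))%:E.
    by rewrite fineK // ge0_fin_numE // (le_lt_trans m1) // ltry.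
  move: m0 key; rewrite mfin lee_fin => m0 key.
  have [mp|] := ltP 0 (fine (mu (Qk k))).
    have := key _ (mulr_gt0 c0 mp); rewrite -EFinM ltxx //.
  by move=> m0'; apply: etrans mfin _; congr EFin; apply/eqP; rewrite eq_le m0 m0'.
pose v t := if pselect (C (u t)) is left _ then u t else a0.
split => //; exists v; split; last split.
- move=> U oU.
  have E1 : I `&` v @^-1` U =
    ((I `&` u @^-1` U) `\` Q) `|` (if pselect (U a0) then Q else set0).
    apply/seteqP; split => t /=.
      move=> [It]; rewrite /v; case: pselect => [Cu|nCu] HU.
        by left; split => // -[].
      by right; case: (pselect (U a0)) => // ?; split.
    case=> [[[It HU] nQ]|].
      split => //; rewrite /v; case: pselect => // nCu.
      by exfalso; apply: nQ; split.
    case: (pselect (U a0)) => // Ua [It nCu]; split => //.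
    by rewrite /v; case: pselect.
  rewrite E1; apply: measurableU; first by apply: measurableD => //; exact: mu0.
  by case: (pselect (U a0)) => ?; [exact: mQ|exact: measurable0].
- by move=> t _; rewrite /v; case: pselect.
- apply: negligibleS Qneg => t /= h.
  case: (pselect (I t)) => It; last by exfalso; apply: h.
  split => //= Cu; apply: h => _; rewrite /v; by case: pselect.
Qed.

Lemma ae_refl01 (v : R -> X) : ae_eq01 v v.
Proof.
exists set0; split; [exact: measurable0 | exact: measure0 | ].
by move=> t /= h; apply: h.
Qed.

Lemma closure_rev (A : set X) (u : R -> X) : separable_metric d ->
  MA d (d_closure d A) u -> M_closure d (MA d A) u.
Proof.
move=> sep [mu0 [w [mw [wc [N [mN N0 sub]]]]]].
split => // e e0.
have I0 : I 0 by rewrite /I01 /= in_itv /= lexx ler01.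
have [a0 Aa0] : exists a0, A a0.
  by have [y [Ay _]] := wc 0 I0 1 ltr01; exists y.
have [en hen] := enum_dense sep a0.
pose del := e / 8.
have del0 : 0 < del by rewrite divr_gt0.
pose b i := if pselect (exists y, A y /\ d (en i) y < 2 * del) is left h
  then projT1 (cid h) else a0.
have bA i : A (b i).
  by rewrite /b; case: pselect => // h; case: cid => y [].
have hb x : d_closure d A x -> exists i, d x (b i) < 3 * del.
  move=> cx; have [y [Ay dy]] := cx del del0; have [i hi] := hen x del del0.
  exists i; rewrite /b; case: pselect => [h|nh]; last first.
    exfalso; apply: nh; exists y; split => //.
    have := d_tri (en i) x y; rewrite (d_sym (en i) x); lra.
  case: cid => z [Az dz] /=.
  have := d_tri x (en i) z; lra.
have [v [mv [vA hv]]] := @approx A a0 b (3 * del) u Aa0 bA mu0.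
exists v; split.
  split => //; exists v; split => //; split => [t _|]; [exact: vA|exact: ae_refl01].
have M0 := M_ge0 a0.
have Md : Mdist d u v <= 3 * del.
  apply: (@Mdist_le _ _ (fun t => (3 * del + M * \1_N t)%:E)).
    move=> t It; rewrite lee_fin /indic.
    case: (pselect (N t)) => Nt.
      by rewrite (mem_set Nt) mulr1; have := hM (u t) (v t); lra.
    rewrite memNset // mulr0 addr0.
    have uw : u t = w t.
      case: (pselect (u t = w t)) => // h; exfalso; apply: Nt; apply: sub => /= H.
      exact: h (H It).
    by apply: ltW; apply: hv; rewrite uw; apply: hb; exact: wc.
  have d30 : 0 <= 3 * del by rewrite mulr_ge0 // ltW.
  rewrite int_eps_ind //.
  have -> : mu (N `&` I) = 0%E.
    apply/eqP; rewrite eq_le measure_ge0 andbT.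
    have := le_measure mu (mem_set (measurableI _ _ mN (I01m R))) (mem_set mN) (@subIsetl _ N I).
    move=> /le_trans; apply; apply: eqle_; exact: N0.
  by rewrite mule0 adde0.
apply: le_lt_trans Md _; rewrite /del; lra.
Qed.
End Metric.

Theorem mainTheorem5 (R : realType) (X : Type) (d : X -> X -> R) (A : set X) :
  is_metric d -> bounded_metric d -> separable_metric d ->
  (exists a : X, ~ A a) ->
  typeZ d (MA d A) /\
  (forall a : X, ~ A a ->
     (forall (n : nat) (u : R -> X), MX d u ->
        MX d (Phi n a u) /\ ~ MA d A (Phi n a u)) /\
     (forall K : set (R -> X), M_compact d K ->
        forall e : R, 0 < e -> exists N : nat, forall n : nat, (N <= n)%N ->
          forall u, K u -> Mdist d (Phi n a u) u < e)) /\
  (forall u : R -> X, M_closure d (MA d A) u <-> MA d (d_closure d A) u).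
Proof.
move=> hm [M hM] sep [a nAa].
have M0 := @M_ge0 _ _ _ hm _ hM a.
have small : forall e : R, 0 < e -> exists N : nat, forall n, (N <= n)%N ->
    forall b (u : R -> X), Mdist d (Phi n b u) u < e.
  move=> e e0.
  have [k hk] := @small_inv _ _ (divr_gt0 e0 (ltr_wpDl M0 ltr01 : 0 < M + 1)).
  exists k => n kn b u; apply: le_lt_trans (@Phi_dist _ _ _ hm _ hM n b u) _.
  have hn : (n.+1%:R)^-1 <= (k.+1%:R)^-1 :> R.
    by rewrite lef_pV2 ?posrE // ler_nat ltnS.
  have x0 : 0 < (k.+1%:R)^-1 :> R by rewrite invr_gt0.
  move: hk; rewrite ltr_pdivlMr ?(ltr_wpDl M0 ltr01) // => hk.
  set x := (k.+1%:R)^-1 in hn x0 hk *; set y := (n.+1%:R)^-1 in hn *.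
  have y0 : 0 <= y by rewrite invr_ge0.
  rewrite mulrC; nra.
split; last split.
- move=> f fM fc e e0.
  have [k hk] := small e e0.
  exists (fun q => Phi k a (f q)); split; last split.
  + by move=> q hq; split; [exact: Phi_meas (fM q hq)|exact: Phi_notMA].
  + move=> q hq e' e'0; have [N [del [del0 H]]] := fc q hq e' e'0.
    exists N, del; split => // q' hq' hN.
    apply: le_lt_trans (H q' hq' hN); apply: (@Mdist_mono _ _ _ hm _ hM) => t It.
    by rewrite /Phi; case: ifP => _; [rewrite (@d_xx _ _ _ hm) (@d_ge0 _ _ _ hm)|exact: lexx].
  + move=> q hq; apply: le_lt_trans (hk k (leqnn k) a (f q)).
    by apply: (@Mdist_mono _ _ _ hm _ hM) => t It; rewrite (@d_sym _ _ _ hm).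
- move=> b nAb; split.
    by move=> n u mu0; split; [exact: Phi_meas|exact: Phi_notMA].
  move=> K _ e e0; have [N hN] := small e e0.
  by exists N => n Nn u _; exact: hN.
- move=> u; split; first exact: (@closure_fwd _ _ _ hm _ hM).
  exact: (@closure_rev _ _ _ hm _ hM).
Qed.
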